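(* Let $m\ge n$, $B\in\mathbb R^{n\times m}$ of full row rank, $f,h$ convex and continuously differentiable with Lipschitz gradients, $\mathcal L(u,p)=f(u)-h(p)+(Bu,p)$ with saddle point $(u^*,p^* )$, and $T_{\mathcal U},\mathcal I_{\mathcal V}$ ($m\times m$), $T_{\mathcal P},\mathcal I_{\mathcal Q}$ ($n\times n$) symmetric positive definite. Suppose $h\in\mathcal S^{1,1}_{\mu_{h,T_{\mathcal P}},L_{h,T_{\mathcal P}}}$ w.r.t. $T_{\mathcal P}$ with $L_{h,T_{\mathcal P}}\le1$, $f\in\mathcal S^{1,1}_{\mu_{f,T_{\mathcal U}},L_{f,T_{\mathcal U}}}$ w.r.t. $T_{\mathcal U}$ with $L_{f,T_{\mathcal U}}\le1$, $f_B$ is strongly convex w.r.t. $\mathcal I_{\mathcal V}$ with $\mu_{f_B,\mathcal I_{\mathcal V}}>0$, and $h_B$ is strongly convex w.r.t. $\mathcal I_{\mathcal Q}$ with $\mu_{h_B,\mathcal I_{\mathcal Q}}>0$. Let $(u_k,p_k)$ be generated from $(u_0,p_0)$ by $$u_{k+1/2}=u_k-T_{\mathcal U}^{-1}(\nabla f(u_k)+B^\top p_k),\quad p_{k+1/2}=p_k-T_{\mathcal P}^{-1}(\nabla h(p_k)-Bu_k),$$ $$u_{k+1}=u_k-\alpha_k\mathcal I_{\mathcal V}^{-1}(\nabla f(u_k)+B^\top p_{k+1/2}),\quad p_{k+1}=p_k-\alpha_k\mathcal I_{\mathcal Q}^{-1}(\nabla h(p_k)-Bu_{k+1/2})$$ (equivalently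 $u_{k+1}=u_k+\alpha_k\mathcal G^u(u_k,p_k)$, $p_{k+1}=p_k+\alpha_k\mathcal G^p(u_k,p_k)$). Then $$\mathcal E(u_{k+1},p_{k+1})\le(1-\delta_k)\mathcal E(u_k,p_k)$$ for $0<\alpha_k<\min\{\mu_{f_B,\mathcal I_{\mathcal V}}/L_{\mathcal V}^2,\ \mu_{h_B,\mathcal I_{\mathcal Q}}/L_{\mathcal Q}^2\}$, where $\delta_k=\min\{\alpha_k(\mu_{f_B,\mathcal I_{\mathcal V}}-L_{\mathcal V}^2\alpha_k),\ \alpha_k(\mu_{h_B,\mathcal I_{\mathcal Q}}-L_{\mathcal Q}^2\alpha_k)\}$ satisfies $0<\delta_k<1$, with $$L_{\mathcal V}^2=2(L_{f_B,\mathcal I_{\mathcal V}}^2+L_S^2L_{e_{\mathcal U},\mathcal I_{\mathcal V}}^2),\qquad L_{\mathcal Q}^2=2(L_{h_B,\mathcal I_{\mathcal Q}}^2+L_S^2L_{e_{\mathcal P},\mathcal I_{\mathcal Q}}^2).$$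
   Context: $\partial_u\mathcal L=\nabla f(u)+B^\top p$, $\partial_p\mathcal L=Bu-\nabla h(p)$; a saddle point satisfies $\nabla\mathcal L(u^*,p^* )=0$. For SPD $M$, $\|x\|_M=(Mx,x)^{1/2}$; $D_g(y,x)=g(y)-g(x)-(\nabla g(x),y-x)$; $g\in\mathcal S^{1,1}_{\mu_{g,M},L_{g,M}}$ w.r.t. $M$ means $\frac{\mu_{g,M}}2\|x-y\|_M^2\le D_g(y,x)\le\frac{L_{g,M}}2\|x-y\|_M^2$ for all $x,y$. Define $f_B(u)=f(u)+\frac12(B^\top T_{\mathcal P}^{-1}Bu,u)$, $h_B(p)=h(p)+\frac12(BT_{\mathcal U}^{-1}B^\top p,p)$, $e_{\mathcal U}(u)=u-T_{\mathcal U}^{-1}\nabla f(u)$, $e_{\mathcal P}(p)=p-T_{\mathcal P}^{-1}\nabla h(p)$, $\mathcal G^u(u,p)=-\mathcal I_{\mathcal V}^{-1}(\partial_u\mathcal L+B^\top T_{\mathcal P}^{-1}\partial_p\mathcal L)$, $\mathcal G^p(u,p)=\mathcal I_{\mathcal Q}^{-1}(\partial_p\mathcal L-BT_{\mathcal U}^{-1}\partial_u\mathcal L)$, and $\mathcal E(u,p)=\frac12\|u-u^*\|^2_{\mathcal I_{\mathcal V}}+\frac12\|p-p^*\|^2_{\mathcal I_{\mathcal Q}}$. $L_{f_B,\mathcal I_{\mathcal V}}$, $L_{h_B,\mathcal I_{\mathcal Q}}$ are the Lipschitz constants of $\nabla f_B,\nabla h_B$ (in the sense $\|\nabla f_B(u_1)-\nabla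 f_B(u_2)\|_{\mathcal I_{\mathcal V}^{-1}}\le L_{f_B,\mathcal I_{\mathcal V}}\|u_1-u_2\|_{\mathcal I_{\mathcal V}}$, similarly for $h_B$ with $\mathcal I_{\mathcal Q}$); $L_{e_{\mathcal U},\mathcal I_{\mathcal V}}$, $L_{e_{\mathcal P},\mathcal I_{\mathcal Q}}$ are the Lipschitz constants of $e_{\mathcal U}$ in $\|\cdot\|_{\mathcal I_{\mathcal V}}$ and of $e_{\mathcal P}$ in $\|\cdot\|_{\mathcal I_{\mathcal Q}}$; $L_S^2=\lambda_{\max}(\mathcal I_{\mathcal Q}^{-1}B\mathcal I_{\mathcal V}^{-1}B^\top)$. *)

(* Defs.v *)
From HB Require Import structures.
From mathcomp Require Import all_boot all_order all_algebra.
From mathcomp Require Import all_classical all_reals all_analysis.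
Set Implicit Arguments. Unset Strict Implicit. Unset Printing Implicit Defensive.
Import Order.TTheory GRing.Theory Num.Theory.
Import numFieldNormedType.Exports.
Local Open Scope ring_scope.

Section Defs.
Variable R : realType.

Definition dotv k (x y : 'cV[R]_k) : R := (x^T *m y) 0 0.

Definition sqnorm k (M : 'M[R]_k) (x : 'cV[R]_k) : R := dotv (M *m x) x.

Definition spd k (M : 'M[R]_k) : Prop :=
  M^T = M /\ forall x : 'cV[R]_k, x != 0 -> 0 < sqnorm M x.

Definition gradient_of k (g : 'cV[R]_k -> R) (gg : 'cV[R]_k -> 'cV[R]_k) : Prop :=
  continuous gg /\
  forall u, differentiable g u /\ forall v, 'd g u v = dotv (gg u) v.

Definition bregman k (g : 'cV[R]_k -> R) (gg : 'cV[R]_k -> 'cV[R]_k) (y x : 'cV[R]_k) : R :=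
  g y - g x - dotv (gg x) (y - x).

Definition S11 k (g : 'cV[R]_k -> R) (gg : 'cV[R]_k -> 'cV[R]_k) (M : 'M[R]_k) (mu L : R) : Prop :=
  forall x y, mu / 2 * sqnorm M (x - y) <= bregman g gg y x /\
              bregman g gg y x <= L / 2 * sqnorm M (x - y).

Definition strongly_convex k (g : 'cV[R]_k -> R) (gg : 'cV[R]_k -> 'cV[R]_k) (M : 'M[R]_k) (mu : R) : Prop :=
  forall x y, mu / 2 * sqnorm M (x - y) <= bregman g gg y x.

Definition lipschitz_grad k (gg : 'cV[R]_k -> 'cV[R]_k) (M : 'M[R]_k) (L : R) : Prop :=
  0 <= L /\ forall u1 u2,
    sqnorm (invmx M) (gg u1 - gg u2) <= L ^+ 2 * sqnorm M (u1 - u2).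

Definition lipschitz_map k (e : 'cV[R]_k -> 'cV[R]_k) (M : 'M[R]_k) (L : R) : Prop :=
  0 <= L /\ forall u1 u2, sqnorm M (e u1 - e u2) <= L ^+ 2 * sqnorm M (u1 - u2).

Definition is_lambda_max k (A : 'M[R]_k) (l : R) : Prop :=
  eigenvalue A l /\ forall a, eigenvalue A a -> a <= l.

Definition fB n m (f : 'cV[R]_m -> R) (B : 'M[R]_(n, m)) (TP : 'M[R]_n) (u : 'cV[R]_m) : R :=
  f u + 2^-1 * dotv (B^T *m invmx TP *m B *m u) u.
Definition gfB n m (gf : 'cV[R]_m -> 'cV[R]_m) (B : 'M[R]_(n, m)) (TP : 'M[R]_n) (u : 'cV[R]_m) :=
  gf u + B^T *m invmx TP *m B *m u.
Definition hB n m (h : 'cV[R]_n -> R) (B : 'M[R]_(n, m)) (TU : 'M[R]_m) (p : 'cV[R]_n) : R :=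
  h p + 2^-1 * dotv (B *m invmx TU *m B^T *m p) p.
Definition ghB n m (gh : 'cV[R]_n -> 'cV[R]_n) (B : 'M[R]_(n, m)) (TU : 'M[R]_m) (p : 'cV[R]_n) :=
  gh p + B *m invmx TU *m B^T *m p.

Definition eU m (gf : 'cV[R]_m -> 'cV[R]_m) (TU : 'M[R]_m) (u : 'cV[R]_m) := u - invmx TU *m gf u.
Definition eP n (gh : 'cV[R]_n -> 'cV[R]_n) (TP : 'M[R]_n) (p : 'cV[R]_n) := p - invmx TP *m gh p.

Definition Lyap n m (IV : 'M[R]_m) (IQ : 'M[R]_n) (us : 'cV[R]_m) (ps : 'cV[R]_n)
  (u : 'cV[R]_m) (p : 'cV[R]_n) : R :=
  2^-1 * sqnorm IV (u - us) + 2^-1 * sqnorm IQ (p - ps).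

End Defs.

(* Main.v *)
Require Import Defs.
From HB Require Import structures.
From mathcomp Require Import all_boot all_order all_algebra.
From mathcomp Require Import all_classical all_reals all_analysis.
From mathcomp Require Import ring lra.
Import Order.TTheory GRing.Theory Num.Theory.
Import numFieldNormedType.Exports.
Local Open Scope ring_scope.

Section Alg.
Context {R : realType}.

Lemma dotvC {k} (x y : 'cV[R]_k) : dotv x y = dotv y x.
Proof. by rewrite /dotv -[y^T *m x]trmxK trmx_mul trmxK [in RHS]mxE. Qed.

Lemma dotvDl {k} (x y z : 'cV[R]_k) : dotv (x + y) z = dotv x z + dotv y z.
Proof. by rewrite /dotv linearD /= mulmxDl mxE. Qed.

Lemma dotvZl {k} a (x z : 'cV[R]_k) : dotv (a *: x) z = a * dotv x z.
Proof. by rewrite /dotv linearZ /= -scalemxAl mxE. Qed.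

Lemma dotvNl {k} (x z : 'cV[R]_k) : dotv (- x) z = - dotv x z.
Proof. by rewrite -scaleN1r dotvZl mulN1r. Qed.

Lemma dotvBl {k} (x y z : 'cV[R]_k) : dotv (x - y) z = dotv x z - dotv y z.
Proof. by rewrite dotvDl dotvNl. Qed.

Lemma dotvDr {k} (x y z : 'cV[R]_k) : dotv z (x + y) = dotv z x + dotv z y.
Proof. by rewrite dotvC dotvDl !(dotvC z). Qed.

Lemma dotvZr {k} a (x z : 'cV[R]_k) : dotv z (a *: x) = a * dotv z x.
Proof. by rewrite dotvC dotvZl dotvC. Qed.

Lemma dotvNr {k} (x z : 'cV[R]_k) : dotv z (- x) = - dotv z x.
Proof. by rewrite dotvC dotvNl dotvC. Qed.

Lemma dotvBr {k} (x y z : 'cV[R]_k) : dotv z (x - y) = dotv z x - dotv z y.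
Proof. by rewrite dotvDr dotvNr. Qed.

Lemma dotv0l {k} (z : 'cV[R]_k) : dotv 0 z = 0.
Proof. by rewrite /dotv linear0 mul0mx mxE. Qed.

Lemma dotv0r {k} (z : 'cV[R]_k) : dotv z 0 = 0.
Proof. by rewrite dotvC dotv0l. Qed.

Lemma dotv_mull {k l} (A : 'M[R]_(l, k)) (x : 'cV[R]_k) (y : 'cV[R]_l) :
  dotv (A *m x) y = dotv x (A^T *m y).
Proof. by rewrite /dotv trmx_mul mulmxA. Qed.

Lemma dotv_self_ge0 {k} (z : 'cV[R]_k) : 0 <= dotv z z.
Proof.
rewrite /dotv mxE; apply: sumr_ge0 => i _; rewrite mxE -expr2; exact: sqr_ge0.
Qed.

Lemma dotv_self_eq0 {k} (z : 'cV[R]_k) : dotv z z = 0 -> z = 0.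
Proof.
rewrite /dotv mxE => /eqP; rewrite psumr_eq0; last first.
  by move=> i _; rewrite mxE -expr2 sqr_ge0.
move=> /allP H; apply/matrixP => i j; rewrite (ord1 j) mxE.
have := H i (mem_index_enum _); rewrite mxE -expr2 sqrf_eq0 => /eqP //.
Qed.

Lemma sqnormN {k} (M : 'M[R]_k) (x : 'cV[R]_k) : sqnorm M (- x) = sqnorm M x.
Proof. by rewrite /sqnorm mulmxN dotvNl dotvNr opprK. Qed.

Lemma sqnorm0 {k} (M : 'M[R]_k) : sqnorm M 0 = 0.
Proof. by rewrite /sqnorm mulmx0 dotv0l. Qed.

Lemma sqnormZ {k} (M : 'M[R]_k) a (x : 'cV[R]_k) : sqnorm M (a *: x) = a ^+ 2 * sqnorm M x.
Proof. by rewrite /sqnorm -scalemxAr dotvZl dotvZr mulrA expr2. Qed.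

Lemma spd_sym {k} {M : 'M[R]_k} : spd M -> M^T = M.
Proof. by case. Qed.

Lemma spd_ge0 {k} {M : 'M[R]_k} (x : 'cV[R]_k) : spd M -> 0 <= sqnorm M x.
Proof.
move=> [_ H]; have [->|/H/ltW //] := eqVneq x 0; by rewrite sqnorm0.
Qed.

Lemma spd_ker {k} {M : 'M[R]_k} {x : 'cV[R]_k} : spd M -> M *m x = 0 -> x = 0.
Proof.
move=> [_ H] Mx; apply/eqP; apply/negPn/negP => /H.
by rewrite /sqnorm Mx dotv0l ltxx.
Qed.

Lemma spd_unit {k} {M : 'M[R]_k} : spd M -> M \in unitmx.
Proof.
move=> hM; rewrite -unitmx_tr -row_free_unit -kermx_eq0.
apply/negPn/negP => /rowV0Pn [v /sub_kermxP vM vn0].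
move/negP: vn0; apply; apply/eqP.
have : M *m v^T = 0 by rewrite -[M]trmxK -trmx_mul vM trmx0.
by move/(spd_ker hM) => /(congr1 trmx); rewrite trmxK trmx0.
Qed.

Lemma spd_inv_sym {k} {M : 'M[R]_k} : spd M -> (invmx M)^T = invmx M.
Proof. by move=> hM; rewrite trmx_inv spd_sym. Qed.

Lemma sqnorm_inv {k} (M : 'M[R]_k) (x : 'cV[R]_k) : spd M ->
  sqnorm (invmx M) x = sqnorm M (invmx M *m x).
Proof.
move=> hM; rewrite /sqnorm mulmxA mulmxV ?spd_unit // mul1mx dotvC //.
Qed.

Lemma spd_inv {k} {M : 'M[R]_k} : spd M -> spd (invmx M).
Proof.
move=> hM; split; first exact: spd_inv_sym.
move=> x xn0; rewrite sqnorm_inv //; have [_ H] := hM; apply: H.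
apply/negP => /eqP Hx; move/negP: xn0; apply; apply/eqP.
by rewrite -[x]mul1mx -(mulmxV (spd_unit hM)) -mulmxA Hx mulmx0.
Qed.

Lemma bf_sym {k} {M : 'M[R]_k} (x y : 'cV[R]_k) : M^T = M -> dotv (M *m x) y = dotv (M *m y) x.
Proof. by move=> hM; rewrite dotv_mull hM dotvC. Qed.

Lemma sqnormD {k} (M : 'M[R]_k) (x y : 'cV[R]_k) : M^T = M ->
  sqnorm M (x + y) = sqnorm M x + 2 * dotv (M *m x) y + sqnorm M y.
Proof.
move=> hM; rewrite /sqnorm mulmxDr !dotvDl !dotvDr (bf_sym y x hM); ring.
Qed.

Lemma sqnormB {k} (M : 'M[R]_k) (x y : 'cV[R]_k) : M^T = M ->
  sqnorm M (x - y) = sqnorm M x - 2 * dotv (M *m x) y + sqnorm M y.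
Proof.
move=> hM; rewrite sqnormD // sqnormN dotvNr mulrN //.
Qed.

Lemma sqnorm_par {k} (M : 'M[R]_k) (x y : 'cV[R]_k) : spd M ->
  sqnorm M (x + y) <= 2 * sqnorm M x + 2 * sqnorm M y.
Proof.
move=> hM; have := spd_ge0 (x - y) hM.
rewrite sqnormB ?(spd_sym hM) // sqnormD ?(spd_sym hM) //; lra.
Qed.

Lemma sqnorm_step {k} (M : 'M[R]_k) (x g : 'cV[R]_k) a : spd M ->
  sqnorm M (x - a *: (invmx M *m g)) =
  sqnorm M x - 2 * a * dotv g x + a ^+ 2 * sqnorm (invmx M) g.
Proof.
move=> hM; rewrite sqnormB ?(spd_sym hM) // sqnormZ -sqnorm_inv //.
rewrite dotvZr bf_sym ?(spd_sym hM) // mulmxA mulmxV ?spd_unit //.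
rewrite mul1mx; ring.
Qed.

End Alg.

Section Conv.
Context {R : realType}.

Lemma cocoerc_half {k} {g : 'cV[R]_k -> R} {gg} {M : 'M[R]_k} : spd M ->
  (forall x y, 0 <= bregman g gg y x /\ bregman g gg y x <= 2^-1 * sqnorm M (x - y)) ->
  forall x y, 2^-1 * sqnorm (invmx M) (gg y - gg x) <= bregman g gg y x.
Proof.
move=> hM H x y.
set d := gg y - gg x.
set z := y - invmx M *m d.
have [h1 _] := H x z.
have [_ h2] := H y z.
move: h1 h2; rewrite /bregman.
have e1 : y - z = invmx M *m d by rewrite /z opprB addrC subrK.
have e2 : z - y = - (invmx M *m d) by rewrite /z addrC addKr.
have e3 : z - x = (y - x) - invmx M *m d by rewrite /z addrAC.
rewrite e1 e2 e3 -sqnorm_inv // dotvNr.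
have e4 : sqnorm (invmx M) d = dotv (gg y) (invmx M *m d) - dotv (gg x) (invmx M *m d).
  by rewrite /sqnorm dotvC /d dotvBl.
rewrite e4 !dotvBr; lra.
Qed.

Lemma cocoerc {k} {g : 'cV[R]_k -> R} {gg} {M : 'M[R]_k} : spd M ->
  (forall x y, 0 <= bregman g gg y x /\ bregman g gg y x <= 2^-1 * sqnorm M (x - y)) ->
  forall x y, sqnorm (invmx M) (gg y - gg x) <= dotv (gg y - gg x) (y - x).
Proof.
move=> hM H x y.
have h1 := cocoerc_half hM H x y.
have h2 := cocoerc_half hM H y x.
move: h1 h2; rewrite /bregman -(opprB (gg y)) sqnormN.
rewrite -(opprB y x) !dotvNr dotvBl; lra.
Qed.

Lemma S11_cocoerc {k} (g : 'cV[R]_k -> R) gg (M : 'M[R]_k) mu L : spd M ->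
  0 <= mu -> L <= 1 -> S11 g gg M mu L ->
  forall x y, sqnorm (invmx M) (gg y - gg x) <= dotv (gg y - gg x) (y - x).
Proof.
move=> hM hmu hL hS; apply: (cocoerc (g:=g) hM) => x y.
have [h1 h2] := hS x y; have h0 := spd_ge0 (x - y) hM.
split.
  apply: le_trans h1; apply: mulr_ge0 => //; apply: mulr_ge0 => //.
apply: (le_trans h2); apply: ler_wpM2r => //; lra.
Qed.

Lemma sc_sum {k} (g : 'cV[R]_k -> R) gg (M : 'M[R]_k) mu :
  strongly_convex g gg M mu ->
  forall x y, mu * sqnorm M (y - x) <= dotv (gg y - gg x) (y - x).
Proof.
move=> hS x y.
have h1 := hS x y; have h2 := hS y x.
move: h1 h2; rewrite /bregman -(opprB y x) sqnormN !dotvNr dotvBl; lra.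
Qed.

End Conv.

Section Ray.
Local Open Scope classical_set_scope.
Local Open Scope ring_scope.
Context {R : realType}.

Lemma sqnorm_rV_cont n (M : 'M[R]_n) :
  continuous (fun v : 'rV[R]_n => sqnorm M v^T).
Proof.
have -> : (fun v : 'rV[R]_n => sqnorm M v^T) =
  (fun v => \sum_(j < n) (\sum_(i < n) M j i * v ord0 i) * v ord0 j).
  apply/funext => v; rewrite /sqnorm /dotv mxE; apply: eq_bigr => j _.
  rewrite !mxE; congr (_ * _); apply: eq_bigr => i _; rewrite !mxE //.
apply: continuous_big; first exact: add_continuous.
move=> j _ v; apply: continuousM; last exact: coord_continuous.
move=> w; apply: continuous_big; first exact: add_continuous.
move=> i _ u; apply: continuousM; first exact: cst_continuous.
exact: coord_continuous.
Qed.


Lemma norm_scale1 n (v : 'rV[R]_n) : v != 0 -> `| `|v|^-1 *: v | = 1.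
Proof.
move=> vn0; rewrite normrZ normfV normr_id mulVf //.
by rewrite normr_eq0.
Qed.

Lemma sqnorm_self_eq0 k (N : 'M[R]_k) (w : 'cV[R]_k) :
  N^T = N -> (forall y, sqnorm N y <= 0) -> sqnorm N w = 0 -> N *m w = 0.
Proof.
move=> hN Hle Hw.
have Hb : forall y, dotv (N *m w) y = 0.
  move=> y; set b := dotv (N *m w) y; set a := sqnorm N y.
  have ha : a <= 0 by exact: Hle.
  set s := (1 - a)^-1.
  have hs : 0 < s by rewrite invr_gt0; lra.
  have hsa : s * (1 - a) = 1 by rewrite mulVf // gt_eqF //; lra.
  have := Hle (w + (b * s) *: y).
  rewrite sqnormD // Hw sqnormZ dotvZr -/a -/b => H.
  have H2 : b ^+ 2 * s * (1 + s) <= 0 by nra.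
  have : b ^+ 2 <= 0.
    have hp : 0 < s * (1 + s) by apply: mulr_gt0 => //; lra.
    by rewrite -(pmulr_lle0 _ hp) mulrA.
  by rewrite le_eqVlt ltNge sqr_ge0 orbF sqrf_eq0 => /eqP.
by apply: dotv_self_eq0; apply: Hb.
Qed.

Lemma rayleigh n (K Q : 'M[R]_n) : (0 < n)%N -> K^T = K -> spd Q ->
  exists l, eigenvalue (invmx Q *m K) l /\ forall x, sqnorm K x <= l * sqnorm Q x.
Proof.
case: n K Q => [//|n] K Q _ hK hQ.
pose qK (v : 'rV[R]_n.+1) := sqnorm K v^T.
pose qQ (v : 'rV[R]_n.+1) := sqnorm Q v^T.
pose r v := qK v / qQ v.
pose A := [set v : 'rV[R]_n.+1 | `|v| = 1].
have qQpos v : v != 0 -> 0 < qQ v.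
  move=> vn0; case: hQ => _ H; apply: H.
  by apply: contra vn0 => /eqP/(congr1 trmx); rewrite trmxK trmx0 => ->.
have An0 v : A v -> v != 0.
  by rewrite /A /= => h; apply/eqP => v0; move: h; rewrite v0 normr0 => /eqP; rewrite eq_sym oner_eq0.
pose v0 : 'rV[R]_n.+1 := const_mx 1.
have v0n0 : v0 != 0.
  by apply/eqP => /matrixP /(_ ord0 ord0); rewrite !mxE => /eqP; rewrite oner_eq0.
have Ane : A !=set0.
  by exists (`|v0|^-1 *: v0); rewrite /A /= norm_scale1.
have Acomp : compact A.
  apply: bounded_closed_compact.
    exists 1; split => // M hM v /= Av; rewrite Av; exact: ltW.
  have : closed ((fun v : 'rV[R]_n.+1 => `|v|) @^-1` [set (1:R)]).
    apply: preimage_closed; last exact: closed_eq.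
    by move=> x _; exact: norm_continuous.
  by [].
have rcont : {within A, continuous r}.
  apply: continuous_in_subspaceT => v; rewrite inE => Av.
  apply: continuousM; first exact: sqnorm_rV_cont.
  apply: continuousV; first by rewrite gt_eqF // qQpos // An0.
  exact: sqnorm_rV_cont.
have [c cA cmax] := EVT_max_rV Ane Acomp rcont.
move: cA; rewrite inE => cA.
have cn0 := An0 _ cA.
exists (r c).
have scaleinv (v : 'rV[R]_n.+1) a : a != 0 -> r (a *: v) = r v.
  move=> an0; rewrite /r /qK /qQ linearZ /= !sqnormZ.
  rewrite invfM mulrACA mulfV ?mul1r // expf_neq0 //.
have bound x : sqnorm K x <= r c * sqnorm Q x.
  have [->|xn0] := eqVneq x 0; first by rewrite !sqnorm0 mulr0.
  have vn0 : x^T != 0 by apply: contra xn0 => /eqP/(congr1 trmx); rewrite trmxK trmx0 => ->.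
  have := cmax (`|x^T|^-1 *: x^T).
  rewrite inE scaleinv ?invr_eq0 ?normr_eq0 // => /(_ (norm_scale1 _ _ vn0)).
  rewrite /r /qK /qQ trmxK ler_pdivrMr //.
  by have := qQpos _ vn0; rewrite /qQ trmxK.
split => //.
pose w := c^T.
have wn0 : w != 0 by apply: contra cn0 => /eqP/(congr1 trmx); rewrite trmxK trmx0 => ->.
pose N := K - r c *: Q.
have hN : N^T = N by rewrite /N linearB /= linearZ /= hK (spd_sym hQ).
have sqN y : sqnorm N y = sqnorm K y - r c * sqnorm Q y.
  by rewrite /sqnorm /N mulmxBl dotvBl -scalemxAl dotvZl.
have Nw : N *m w = 0.
  apply: (sqnorm_self_eq0 _ _ _ hN).
    by move=> y; rewrite sqN; have := bound y; lra.
  rewrite sqN /r /qK /qQ /w mulfVK //.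
    by rewrite subrr.
  by rewrite gt_eqF // qQpos.
have Kw : K *m w = r c *: (Q *m w).
  by apply/eqP; rewrite -subr_eq0 scalemxAl -mulmxBl; apply/eqP.
apply/eigenvalueP; exists (Q *m w)^T.
  rewrite trmx_mul (spd_sym hQ) -mulmxA (mulmxA Q) mulmxV ?spd_unit // mul1mx.
  rewrite -[K]hK -trmx_mul Kw linearZ /= trmx_mul (spd_sym hQ) //.
apply/eqP => /(congr1 trmx); rewrite trmxK trmx0 => /(spd_ker hQ) w0.
by rewrite w0 eqxx in wn0.
Qed.

End Ray.

Section Swap.
Context {R : realType}.

Lemma eig_swap n m (X : 'M[R]_(n, m)) (Y : 'M[R]_(m, n)) a :
  a != 0 -> eigenvalue (X *m Y) a -> eigenvalue (Y *m X) a.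
Proof.
move=> an0 /eigenvalueP [v hv vn0]; apply/eigenvalueP; exists (v *m X).
  by rewrite mulmxA -(mulmxA v) hv -scalemxAl.
apply/eqP => vX0; move: hv; rewrite mulmxA vX0 mul0mx => /esym/eqP.
by rewrite scaler_eq0 (negbTE an0) (negbTE vn0).
Qed.

Lemma eig_pos n (A : 'M[R]_n) (l : R) : eigenvalue A l -> (0 < n)%N.
Proof.
move=> /eigenvalueP [v _ vn0]; rewrite lt0n; apply/eqP => n0.
by move: v vn0; rewrite n0 => v; rewrite thinmx0 eqxx.
Qed.

End Swap.

Ltac mxring := apply/matrixP => i j; rewrite !mxE; ring.

Theorem theorem5p5 (R : realType) (n m : nat) (hnm : (n <= m)%N)
  (B : 'M[R]_(n, m)) (hrank : \rank B = n)
  (f : 'cV[R]_m -> R) (gf : 'cV[R]_m -> 'cV[R]_m)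
  (h : 'cV[R]_n -> R) (gh : 'cV[R]_n -> 'cV[R]_n)
  (hgf : gradient_of f gf) (hgh : gradient_of h gh)
  (TU IV : 'M[R]_m) (TP IQ : 'M[R]_n)
  (hTU : spd TU) (hIV : spd IV) (hTP : spd TP) (hIQ : spd IQ)
  (us : 'cV[R]_m) (ps : 'cV[R]_n)
  (hsad_u : gf us + B^T *m ps = 0) (hsad_p : B *m us - gh ps = 0)
  (mu_h L_h : R) (hmu_h : 0 <= mu_h) (hL_h : L_h <= 1) (hS_h : S11 h gh TP mu_h L_h)
  (mu_f L_f : R) (hmu_f : 0 <= mu_f) (hL_f : L_f <= 1) (hS_f : S11 f gf TU mu_f L_f)
  (mu_fB : R) (hmu_fB : 0 < mu_fB)
  (hsc_fB : strongly_convex (fB f B TP) (gfB gf B TP) IV mu_fB)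
  (mu_hB : R) (hmu_hB : 0 < mu_hB)
  (hsc_hB : strongly_convex (hB h B TU) (ghB gh B TU) IQ mu_hB)
  (L_fB L_hB L_eU L_eP LS2 : R)
  (hL_fB : lipschitz_grad (gfB gf B TP) IV L_fB)
  (hL_hB : lipschitz_grad (ghB gh B TU) IQ L_hB)
  (hL_eU : lipschitz_map (eU gf TU) IV L_eU)
  (hL_eP : lipschitz_map (eP gh TP) IQ L_eP)
  (hLS : is_lambda_max (invmx IQ *m B *m invmx IV *m B^T) LS2)
  (u : nat -> 'cV[R]_m) (p : nat -> 'cV[R]_n) (alpha : nat -> R)
  (hiter : forall k,
     let uh := u k - invmx TU *m (gf (u k) + B^T *m p k) in
     let ph := p k - invmx TP *m (gh (p k) - B *m u k) in
     u k.+1 = u k - alpha k *: (invmx IV *m (gf (u k) + B^T *m ph)) /\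
     p k.+1 = p k - alpha k *: (invmx IQ *m (gh (p k) - B *m uh))) :
  let LV2 := 2 * (L_fB ^+ 2 + LS2 * L_eU ^+ 2) in
  let LQ2 := 2 * (L_hB ^+ 2 + LS2 * L_eP ^+ 2) in
  forall k, 0 < alpha k -> alpha k < Num.min (mu_fB / LV2) (mu_hB / LQ2) ->
  let delta := Num.min (alpha k * (mu_fB - LV2 * alpha k))
                       (alpha k * (mu_hB - LQ2 * alpha k)) in
  0 < delta < 1 /\
  Lyap IV IQ us ps (u k.+1) (p k.+1) <= (1 - delta) * Lyap IV IQ us ps (u k) (p k).
Proof.
move=> LV2 LQ2 k ha0 hamin delta.
have [eigLS maxLS] := hLS.
have hn : (0 < n)%N by exact: eig_pos eigLS.
have hm : (0 < m)%N by exact: leq_trans hnm.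
have hIVi := spd_inv hIV; have hIQi := spd_inv hIQ.
have hTPi := spd_inv hTP; have hTUi := spd_inv hTU.
pose K1 := B *m invmx IV *m B^T.
have hK1 : K1^T = K1 by rewrite /K1 !trmx_mul trmxK (spd_inv_sym hIV) mulmxA.
pose K2 := B^T *m invmx IQ *m B.
have hK2 : K2^T = K2 by rewrite /K2 !trmx_mul trmxK (spd_inv_sym hIQ) mulmxA.
have [l1 [eig1 bnd1]] := rayleigh _ _ _ hn hK1 hIQ.
have [l2 [eig2 bnd2]] := rayleigh _ _ _ hm hK2 hIV.
have l1le : l1 <= LS2 by apply: maxLS; move: eig1; rewrite /K1 !mulmxA.
have sqK1 x : sqnorm K1 x = sqnorm (invmx IV) (B^T *m x).
  by rewrite /sqnorm /K1 -!mulmxA dotv_mull.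
have sqK2 x : sqnorm K2 x = sqnorm (invmx IQ) (B *m x).
  by rewrite /sqnorm /K2 -!mulmxA dotv_mull trmxK.
have l1ge0 : 0 <= l1.
  pose x0 : 'cV[R]_n := const_mx 1.
  have x0n0 : x0 != 0.
    apply/eqP => /matrixP /(_ (Ordinal hn) ord0); rewrite !mxE => /eqP.
    by rewrite oner_eq0.
  have hpos : 0 < sqnorm IQ x0 by case: hIQ => _; apply.
  rewrite -(pmulr_lge0 _ hpos); apply: le_trans (bnd1 x0).
  by rewrite sqK1; exact: spd_ge0.
have LS0 : 0 <= LS2 by exact: le_trans l1ge0 l1le.
have l2le : l2 <= LS2.
  have [->//|l2n0] := eqVneq l2 0.
  apply: maxLS.
  have := eig_swap _ _ (invmx IV *m B^T) (invmx IQ *m B) _ l2n0.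
  rewrite !mulmxA; apply; by move: eig2; rewrite /K2 !mulmxA.
have bndK1 x : sqnorm (invmx IV) (B^T *m x) <= LS2 * sqnorm IQ x.
  by rewrite -sqK1; apply: le_trans (bnd1 x) _; apply: ler_wpM2r => //; exact: spd_ge0.
have bndK2 x : sqnorm (invmx IQ) (B *m x) <= LS2 * sqnorm IV x.
  by rewrite -sqK2; apply: le_trans (bnd2 x) _; apply: ler_wpM2r => //; exact: spd_ge0.
move: (hiter k) => /= [Hu Hp].
have e1 : gf us = - (B^T *m ps) by apply/eqP; rewrite -addr_eq0 hsad_u.
have e2 : gh ps = B *m us by exact: esym (subr0_eq hsad_p).
set al := alpha k.
set a := gfB gf B TP (u k) - gfB gf B TP us.
set b := eP gh TP (p k) - eP gh TP ps.
set c := ghB gh B TU (p k) - ghB gh B TU ps.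
set d := eU gf TU (u k) - eU gf TU us.
have eg1 : gf (u k) + B^T *m (p k - invmx TP *m (gh (p k) - B *m u k)) = a + B^T *m b.
  rewrite /a /b /gfB /eP e1 e2 !(mulmxDr, mulmxBr, mulmxN, mulmxA); mxring.
have eg2 : gh (p k) - B *m (u k - invmx TU *m (gf (u k) + B^T *m p k)) = c - B *m d.
  rewrite /c /d /ghB /eU e1 e2 !(mulmxDr, mulmxBr, mulmxN, mulmxA); mxring.
have Hu' : u k.+1 - us = (u k - us) - al *: (invmx IV *m (a + B^T *m b)).
  by rewrite Hu eg1 addrAC.
have Hp' : p k.+1 - ps = (p k - ps) - al *: (invmx IQ *m (c - B *m d)).
  by rewrite Hp eg2 addrAC.
rewrite /Lyap Hu' Hp' !sqnorm_step //.
set du := u k - us. set dp := p k - ps.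
set Dgf := gf (u k) - gf us. set Dgh := gh (p k) - gh ps.
have hX1 : dotv (a + B^T *m b) du = dotv a du + dotv b (B *m du).
  by rewrite dotvDl dotv_mull trmxK.
have hX2 : dotv (c - B *m d) dp = dotv c dp - dotv d (B^T *m dp).
  by rewrite dotvBl dotv_mull.
have sc1 : mu_fB * sqnorm IV du <= dotv a du := sc_sum _ _ _ _ hsc_fB us (u k).
have sc2 : mu_hB * sqnorm IQ dp <= dotv c dp := sc_sum _ _ _ _ hsc_hB ps (p k).
have ea' : a = Dgf + B^T *m (invmx TP *m (B *m du)).
  rewrite /a /Dgf /du /gfB !(mulmxDr, mulmxBr, mulmxN, mulmxA); mxring.
have ea : dotv a du = dotv Dgf du + sqnorm (invmx TP) (B *m du).
  by rewrite ea' dotvDl dotv_mull trmxK.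
have ec' : c = Dgh + B *m (invmx TU *m (B^T *m dp)).
  rewrite /c /Dgh /dp /ghB !(mulmxDr, mulmxBr, mulmxN, mulmxA); mxring.
have ec : dotv c dp = dotv Dgh dp + sqnorm (invmx TU) (B^T *m dp).
  by rewrite ec' dotvDl dotv_mull.
have eb' : b = dp - invmx TP *m Dgh.
  rewrite /b /Dgh /dp /eP !(mulmxDr, mulmxBr, mulmxN, mulmxA); mxring.
have eb : dotv b (B *m du) = dotv dp (B *m du) - dotv (invmx TP *m Dgh) (B *m du).
  by rewrite eb' dotvBl.
have ed' : d = du - invmx TU *m Dgf.
  rewrite /d /Dgf /du /eU !(mulmxDr, mulmxBr, mulmxN, mulmxA); mxring.
have ed : dotv d (B^T *m dp) = dotv du (B^T *m dp) - dotv (invmx TU *m Dgf) (B^T *m dp).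
  by rewrite ed' dotvBl.
have ecross : dotv dp (B *m du) = dotv du (B^T *m dp) by rewrite dotvC dotv_mull.
have co1 : sqnorm (invmx TU) Dgf <= dotv Dgf du :=
  S11_cocoerc _ _ _ _ _ hTU hmu_f hL_f hS_f us (u k).
have co2 : sqnorm (invmx TP) Dgh <= dotv Dgh dp :=
  S11_cocoerc _ _ _ _ _ hTP hmu_h hL_h hS_h ps (p k).
have nn1 := spd_ge0 (Dgh - B *m du) hTPi.
rewrite sqnormB ?(spd_inv_sym hTP) // in nn1.
have nn2 := spd_ge0 (Dgf + B^T *m dp) hTUi.
rewrite sqnormD ?(spd_inv_sym hTU) // in nn2.
set su := sqnorm IV du. set sp := sqnorm IQ dp.
have su0 : 0 <= su by exact: spd_ge0.
have sp0 : 0 <= sp by exact: spd_ge0.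
have hX : mu_fB * su + mu_hB * sp <=
          2 * (dotv (a + B^T *m b) du + dotv (c - B *m d) dp).
  rewrite hX1 hX2; move: sc1 sc2 nn1 nn2 co1 co2.
  rewrite ea ec eb ed ecross -/su -/sp; lra.
have N1 : sqnorm (invmx IV) (a + B^T *m b) <=
          2 * L_fB ^+ 2 * su + 2 * (LS2 * L_eP ^+ 2) * sp.
  have par := sqnorm_par _ a (B^T *m b) hIVi.
  have la := hL_fB.2 (u k) us.
  have lb := bndK1 b.
  have le := hL_eP.2 (p k) ps.
  have le' : LS2 * sqnorm IQ b <= LS2 * (L_eP ^+ 2 * sp) by apply: ler_wpM2l.
  rewrite -/a -/du -/su in la; rewrite -/b -/dp -/sp in le.
  lra.
have N2 : sqnorm (invmx IQ) (c - B *m d) <=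
          2 * L_hB ^+ 2 * sp + 2 * (LS2 * L_eU ^+ 2) * su.
  have par := sqnorm_par _ c (- (B *m d)) hIQi.
  rewrite sqnormN in par.
  have la := hL_hB.2 (p k) ps.
  have lb := bndK2 d.
  have le := hL_eU.2 (u k) us.
  have le' : LS2 * sqnorm IV d <= LS2 * (L_eU ^+ 2 * su) by apply: ler_wpM2l.
  rewrite -/c -/dp -/sp in la; rewrite -/d -/du -/su in le.
  lra.
have [ha1 ha2] : al < mu_fB / LV2 /\ al < mu_hB / LQ2.
  by move: hamin; rewrite lt_min => /andP.
have LV0 : 0 < LV2.
  rewrite ltNge; apply/negP => hle.
  have : mu_fB / LV2 <= 0 by apply: mulr_ge0_le0; [exact: ltW | rewrite invr_le0].
  by move=> H; have := lt_le_trans (lt_trans ha0 ha1) H; rewrite ltxx.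
have LQ0 : 0 < LQ2.
  rewrite ltNge; apply/negP => hle.
  have : mu_hB / LQ2 <= 0 by apply: mulr_ge0_le0; [exact: ltW | rewrite invr_le0].
  by move=> H; have := lt_le_trans (lt_trans ha0 ha2) H; rewrite ltxx.
have d1 : al * LV2 < mu_fB by rewrite -ltr_pdivlMr.
have d2 : al * LQ2 < mu_hB by rewrite -ltr_pdivlMr.
have hd1 : delta <= al * (mu_fB - LV2 * al) by rewrite /delta ge_min lexx.
have hd2 : delta <= al * (mu_hB - LQ2 * al) by rewrite /delta ge_min lexx orbT.
have dpos : 0 < delta.
  by rewrite /delta -/al lt_min; apply/andP; split; apply: mulr_gt0 => //; lra.
have hmL : mu_fB ^+ 2 <= L_fB ^+ 2.
  pose e : 'cV[R]_m := const_mx 1.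
  have en0 : e != 0.
    apply/eqP => /matrixP /(_ (Ordinal hm) ord0); rewrite !mxE => /eqP.
    by rewrite oner_eq0.
  have spos : 0 < sqnorm IV e by case: hIV => _; apply.
  have eE : us + e - us = e by rewrite addrC addKr.
  have sc := sc_sum _ _ _ _ hsc_fB us (us + e).
  have lip := hL_fB.2 (us + e) us.
  rewrite eE in sc lip.
  set a0 := gfB gf B TP (us + e) - gfB gf B TP us in sc lip.
  have st := spd_ge0 (e - mu_fB^-1 *: (invmx IV *m a0)) hIV.
  rewrite sqnorm_step // in st.
  set s0 := sqnorm IV e in spos sc lip st.
  set dt := dotv a0 e in sc st.
  set Nn := sqnorm (invmx IV) a0 in lip st.
  have st2 : 0 <= mu_fB ^+ 2 * s0 - 2 * mu_fB * dt + Nn.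
    have -> : mu_fB ^+ 2 * s0 - 2 * mu_fB * dt + Nn =
      mu_fB ^+ 2 * (s0 - 2 * mu_fB^-1 * dt + mu_fB^-1 ^+ 2 * Nn).
      by field; rewrite gt_eqF.
    by apply: mulr_ge0 => //; exact: sqr_ge0.
  have scm : mu_fB * (mu_fB * s0) <= mu_fB * dt by apply: ler_wpM2l => //; exact: ltW.
  rewrite -subr_ge0 -(pmulr_lge0 _ spos).
  lra.
have LV2ge : 2 * mu_fB ^+ 2 <= LV2.
  rewrite /LV2; have : 0 <= LS2 * L_eU ^+ 2 by apply: mulr_ge0 => //; exact: sqr_ge0.
  lra.
split.
  apply/andP; split => //.
  have f1 : al ^+ 2 * (2 * mu_fB ^+ 2) <= al ^+ 2 * LV2 by apply: ler_wpM2l => //; exact: sqr_ge0.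
  have sq := sqr_ge0 (2 * al * mu_fB - 2^-1).
  lra.
set X1 := dotv (a + B^T *m b) du.
set X2 := dotv (c - B *m d) dp.
set M1 := sqnorm (invmx IV) (a + B^T *m b) in N1 *.
set M2 := sqnorm (invmx IQ) (c - B *m d) in N2 *.
have fX : al * (mu_fB * su + mu_hB * sp) <= al * (2 * (X1 + X2)).
  by apply: ler_wpM2l => //; exact: ltW.
have fN : al ^+ 2 * (M1 + M2) <= al ^+ 2 * (2 * L_fB ^+ 2 * su + 2 * (LS2 * L_eP ^+ 2) * sp
   + (2 * L_hB ^+ 2 * sp + 2 * (LS2 * L_eU ^+ 2) * su)).
  by apply: ler_wpM2l; [exact: sqr_ge0 | exact: lerD].
have fd1 : delta * su <= al * (mu_fB - LV2 * al) * su by exact: ler_wpM2r.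
have fd2 : delta * sp <= al * (mu_hB - LQ2 * al) * sp by exact: ler_wpM2r.
rewrite /LV2 in fd1; rewrite /LQ2 in fd2.
lra.
Qed.
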